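(* Let $A$ be a formula in the language of $\mathbf{GL}$ whose only propositional variable (if any) is $p$. If $\mathbf{GL} \vdash A$, then $\mathbf{IL} \vdash A^{\dagger}$.
   Context: $\mathbf{GL}$ (Gödel–Löb provability logic) is the normal modal logic in one modality $\Box$ axiomatized over classical propositional logic by all instances of $\Box(A\to B)\to(\Box A\to\Box B)$ and $\Box(\Box A\to A)\to\Box A$, with rules Modus Ponens and Necessitation. $\mathbf{IL}$ is the logic in the language with a unary modality $\Box$ and a binary modality $\rhd$, with rules Modus Ponens and Necessitation, whose axioms are all propositional tautologies, all axioms of $\mathbf{GL}$, and all instances of: (J1) $\Box(A\to B)\to A\rhd B$; (J2) $(A\rhd B)\wedge(B\rhd C)\to A\rhd C$; (J3) $(A\rhd C)\wedge(B\rhd C)\to (A\vee B)\rhd C$; (J4) $A\rhd B\to(\Diamond A\to\Diamond B)$; (J5) $\Diamond A\rhd A$. Here $\Diamond\varphi$ abbreviates $\neg\Box\neg\varphi$, $\top$ abbreviates $\neg\bot$, and formulas are built from $\bot$, $\to$ (other Boolean connectives being abbreviations), $\Box$ and (in $\mathbf{IL}$) $\rhd$. The translation $\dagger$ from $\mathbf{GL}$-formulas in the single variable $p$ to variable-free $\mathbf{IL}$-formulas is defined by: $\bot^{\dagger}=\bot$; $p^{\dagger}=\Diamond\Diamond\top\to(\top\rhd\Diamond\top)$; $(A\to B)^{\dagger}=A^{\dagger}\to B^{\dagger}$; $(\Box A)^{\dagger}=\Box(\Diamond\Diamond\top\to A^{\dagger})$. *)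

(* Defs.v *)
Inductive fm : Type :=
| Var : nat -> fm
| Bot : fm
| Imp : fm -> fm -> fm
| Box : fm -> fm
| Rhd : fm -> fm -> fm.

Definition Neg (A : fm) : fm := Imp A Bot.
Definition Top : fm := Neg Bot.
Definition Or (A B : fm) : fm := Imp (Neg A) B.
Definition And (A B : fm) : fm := Neg (Imp A (Neg B)).
Definition Dia (A : fm) : fm := Neg (Box (Neg A)).

(* A boolean valuation respecting the Boolean connectives; modal formulas
   and variables are treated as atoms. *)
Definition bool_hom (v : fm -> bool) : Prop :=
  v Bot = false /\
  forall A B, v (Imp A B) = implb (v A) (v B).

Definition taut (A : fm) : Prop := forall v, bool_hom v -> v A = true.

Fixpoint rhd_free (A : fm) : Prop :=
  match A with
  | Var _ | Bot => True
  | Imp B C => rhd_free B /\ rhd_free C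
  | Box B => rhd_free B
  | Rhd _ _ => False
  end.

Inductive GL_prv : fm -> Prop :=
| GL_taut : forall A, rhd_free A -> taut A -> GL_prv A
| GL_K : forall A B, rhd_free A -> rhd_free B ->
    GL_prv (Imp (Box (Imp A B)) (Imp (Box A) (Box B)))
| GL_L : forall A, rhd_free A ->
    GL_prv (Imp (Box (Imp (Box A) A)) (Box A))
| GL_MP : forall A B, GL_prv (Imp A B) -> GL_prv A -> GL_prv B
| GL_Nec : forall A, GL_prv A -> GL_prv (Box A).

Inductive IL_prv : fm -> Prop :=
| IL_taut : forall A, taut A -> IL_prv A
| IL_K : forall A B, IL_prv (Imp (Box (Imp A B)) (Imp (Box A) (Box B)))
| IL_L : forall A, IL_prv (Imp (Box (Imp (Box A) A)) (Box A))
| IL_J1 : forall A B, IL_prv (Imp (Box (Imp A B)) (Rhd A B))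
| IL_J2 : forall A B C,
    IL_prv (Imp (And (Rhd A B) (Rhd B C)) (Rhd A C))
| IL_J3 : forall A B C,
    IL_prv (Imp (And (Rhd A C) (Rhd B C)) (Rhd (Or A B) C))
| IL_J4 : forall A B, IL_prv (Imp (Rhd A B) (Imp (Dia A) (Dia B)))
| IL_J5 : forall A, IL_prv (Rhd (Dia A) A)
| IL_MP : forall A B, IL_prv (Imp A B) -> IL_prv A -> IL_prv B
| IL_Nec : forall A, IL_prv A -> IL_prv (Box A).

Definition p : fm := Var 0.

Fixpoint only_p (A : fm) : Prop :=
  match A with
  | Var n => n = 0
  | Bot => True
  | Imp B C => only_p B /\ only_p C
  | Box B => only_p B
  | Rhd B C => only_p B /\ only_p C
  end.

(* The translation dagger (defined on all formulas; on Rhd it is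
   irrelevant for GL formulas and is set homomorphically). *)
Fixpoint dagger (A : fm) : fm :=
  match A with
  | Var _ => Imp (Dia (Dia Top)) (Rhd Top (Dia Top))
  | Bot => Bot
  | Imp B C => Imp (dagger B) (dagger C)
  | Box B => Box (Imp (Dia (Dia Top)) (dagger B))
  | Rhd B C => Rhd (dagger B) (dagger C)
  end.

(* Main.v *)
Require Import Defs.

Ltac solve_taut :=
  let v := fresh "v" in let H0 := fresh in let H1 := fresh in
  intros v [H0 H1]; repeat rewrite H1; rewrite ?H0;
  repeat match goal with |- context [v ?X] => destruct (v X) end; reflexivity.

Lemma mp_taut A B : IL_prv A -> taut (Imp A B) -> IL_prv B.
Proof. intros HA HT; eapply IL_MP; [apply IL_taut; exact HT | exact HA]. Qed.

Lemma mp_taut2 A B C : IL_prv A -> IL_prv B -> taut (Imp A (Imp B C)) -> IL_prv C.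
Proof. intros HA HB HT; eapply IL_MP; [eapply mp_taut; [exact HA| exact HT] | exact HB]. Qed.

Lemma chain X Y Z : IL_prv (Imp X Y) -> IL_prv (Imp Y Z) -> IL_prv (Imp X Z).
Proof. intros H1 H2; apply (mp_taut2 _ _ _ H1 H2); solve_taut. Qed.

Lemma box_mono A B : IL_prv (Imp A B) -> IL_prv (Imp (Box A) (Box B)).
Proof. intros H; eapply IL_MP; [apply IL_K | apply IL_Nec; exact H]. Qed.

Lemma taut_dagger A : taut A -> taut (dagger A).
Proof.
  intros HT v [H0 H1].
  apply (HT (fun X => v (dagger X))). split.
  - exact H0.
  - intros; simpl; apply H1.
Qed.

Lemma gen D a b : IL_prv (Imp (Box (Imp D (Imp a b))) (Imp (Box (Imp D a)) (Box (Imp D b)))).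
Proof.
  eapply chain.
  - apply box_mono. apply IL_taut with (A := Imp (Imp D (Imp a b)) (Imp (Imp D a) (Imp D b))). solve_taut.
  - apply IL_K.
Qed.

Lemma genL D a : IL_prv (Imp (Box (Imp D (Imp (Box (Imp D a)) a))) (Box (Imp D a))).
Proof.
  eapply chain.
  - apply box_mono. apply IL_taut with (A := Imp (Imp D (Imp (Box (Imp D a)) a)) (Imp (Box (Imp D a)) (Imp D a))). solve_taut.
  - apply IL_L.
Qed.

Lemma main_gen A : GL_prv A -> IL_prv (dagger A).
Proof.
  induction 1; simpl.
  - apply IL_taut, taut_dagger; assumption.
  - apply gen.
  - apply genL.
  - simpl in IHGL_prv1. eapply IL_MP; eauto.
  - apply IL_Nec. eapply mp_taut; [exact IHGL_prv|]. solve_taut.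
Qed.

Theorem mainTheorem1 (A : fm) :
  rhd_free A -> only_p A -> GL_prv A -> IL_prv (dagger A).
Proof. intros _ _; apply main_gen. Qed.
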